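(* Let $k\geq 2$ be an integer such that $n=2k+1$ is prime. Then there is a connected $k$-colouring of the edges of $K_n$ in which exactly $\frac{k(k-2)}{3}$ distinct $3$-sets of colours occur as colour sets of multicoloured triangles.
   Context: A $k$-colouring of the edges of the complete graph $K_n$ (colours from $\{1,\dots,k\}$) is called connected if for each colour $i$ the edges of colour $i$ form a connected spanning subgraph of $K_n$. A triangle is multicoloured if its three edges have three distinct colours; its colour set is the set of these three colours. *)

(* Defs.v *)
From mathcomp Require Import all_boot.
Set Implicit Arguments. Unset Strict Implicit. Unset Printing Implicit Defensive.

(* An edge k-colouring of K_n: vertices 'I_n, colours 'I_k (standing for 1..k),
   given as a function on ordered pairs; only its values on pairs of distinct
   vertices matter, and it must be symmetric there. *)
Definition edge_colouring (n k : nat) (c : 'I_n -> 'I_n -> 'I_k) : Prop :=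
  forall x y : 'I_n, x != y -> c x y = c y x.

Definition colour_class (n k : nat) (c : 'I_n -> 'I_n -> 'I_k) (i : 'I_k)
  : rel 'I_n := fun u v => (u != v) && (c u v == i).

Definition connected_colouring (n k : nat) (c : 'I_n -> 'I_n -> 'I_k) : Prop :=
  forall (i : 'I_k) (x y : 'I_n), connect (colour_class c i) x y.

Definition multicoloured (n k : nat) (c : 'I_n -> 'I_n -> 'I_k) (x y z : 'I_n)
  : bool :=
  [&& x != y, y != z, x != z,
      c x y != c y z, c y z != c x z & c x y != c x z].

Definition triangle_colour_sets (n k : nat) (c : 'I_n -> 'I_n -> 'I_k)
  : {set {set 'I_k}} :=
  [set [set c t.1.1 t.1.2; c t.1.2 t.2; c t.1.1 t.2]
    | t : 'I_n * 'I_n * 'I_n & multicoloured c t.1.1 t.1.2 t.2].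

(* Main.v *)
Require Import Defs.
From mathcomp Require Import all_boot all_algebra.
From mathcomp Require Import zify ring lra.
Set Implicit Arguments. Unset Strict Implicit. Unset Printing Implicit Defensive.
Import GRing.Theory.
Local Open Scope ring_scope.

Lemma valM m (x y : 'I_m.+2) : val (x * y) = ((val x * val y) %% m.+2)%N.
Proof. by []. Qed.
Lemma valN m (x : 'I_m.+2) : val (- x) = ((m.+2 - val x) %% m.+2)%N.
Proof. by []. Qed.

Lemma Zp_dom m (hp : prime m.+2) (x y : 'I_m.+2) : x * y = 0 -> x = 0 \/ y = 0.
Proof.
move=> /(congr1 val); rewrite valM /= => /eqP; rewrite -/(dvdn _ _) Euclid_dvdM //.
case/orP=> /dvdn_leq H; [left|right]; apply/val_inj => /=;
 have := ltn_ord x; have := ltn_ord y; lia.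
Qed.

Lemma natZp m c : (c < m.+2)%N -> val (c%:R : 'I_m.+2) = c.
Proof. by move=> h; rewrite Zp_nat /= modn_small. Qed.

Lemma natZp_neq0 m c : (0 < c < m.+2)%N -> (c%:R : 'I_m.+2) != 0.
Proof. by case/andP=> h1 h2; apply/eqP=> /(congr1 val); rewrite natZp //= => E; rewrite E in h1. Qed.

Definition cl m k (x : 'I_m.+2) : 'I_k.+1 := inord (minn x (m.+2 - x)).-1.

Lemma valN0 m (x : 'I_m.+2) : x != 0 -> nat_of_ord (- x) = (m.+2 - x)%N.
Proof.
move=> hx; rewrite valN modn_small //; have : val x != 0%N by [].
have := ltn_ord x; lia.
Qed.

Lemma valN0' m (x : 'I_m.+2) : x != 0 -> val (- x) = (m.+2 - val x)%N.
Proof. exact: valN0. Qed.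

Lemma clN m k (x : 'I_m.+2) : cl k (- x) = cl k x.
Proof.
have [->|hx] := eqVneq x 0; first by rewrite oppr0.
rewrite /cl valN0 //. rewrite minnC subKn //; apply: ltnW; exact: ltn_ord.
Qed.

Lemma cl_val m k (x : 'I_m.+2) : m = (2 * k).+1 -> val (cl k x) = (minn x (m.+2 - x)).-1.
Proof. move=> Em; rewrite /cl /= inordK //; have := ltn_ord x; lia. Qed.

Lemma cl_eq m k (x y : 'I_m.+2) : m = (2 * k).+1 -> x != 0 -> y != 0 ->
  (cl k x == cl k y) = (y == x) || (y == - x).
Proof.
move=> Em hx hy; rewrite -[y == -x]val_eqE valN0' // -[y == x]val_eqE -val_eqE !cl_val //.
have h1 : nat_of_ord x != 0%N by []. have h2 : nat_of_ord y != 0%N by [].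
have h3 := ltn_ord x; have h4 := ltn_ord y.
rewrite -!subn1; by do ![case: eqP] => //= *; lia.
Qed.

Lemma two_neq0 m (hp : prime m.+2) (x : 'I_m.+2) : (0 < m)%N -> x != 0 -> x + x != 0.
Proof.
move=> hm hx; apply/eqP => H.
have : (2%:R : 'I_m.+2) * x = 0 by rewrite -H; ring.
case/(Zp_dom hp) => [/eqP|/eqP]; last by rewrite (negbTE hx).
by rewrite (negbTE (@natZp_neq0 m 2 _)) //; lia.
Qed.

Definition ok3 m k (a1 a2 a3 : 'I_m.+2) : bool :=
  [&& a1 != 0, a2 != 0, a3 != 0, cl k a1 != cl k a2, cl k a2 != cl k a3 & cl k a1 != cl k a3].

Definition sq3 m (a1 a2 a3 : 'I_m.+2) : seq ('I_m.+2 * 'I_m.+2) :=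
  [:: (a1, a2); (a2, a1); (a1, a3); (a3, a1); (a2, a3); (a3, a2);
      (-a1, -a2); (-a2, -a1); (-a1, -a3); (-a3, -a1); (-a2, -a3); (-a3, -a2)].

Lemma pm6 m k (Em : m = (2 * k).+1) (a1 a2 a3 x : 'I_m.+2) :
  ok3 k a1 a2 a3 -> x != 0 -> cl k x \in [set cl k a1; cl k a2; cl k a3] ->
  x = a1 \/ x = -a1 \/ x = a2 \/ x = -a2 \/ x = a3 \/ x = -a3.
Proof.
move=> /andP[h1 /andP[h2 /andP[h3 _]]] hx; rewrite !inE.
(case/orP => [/orP[]|]) => /eqP/esym/eqP; rewrite cl_eq //; case/orP=> /eqP ->.
all: tauto.
Qed.

Ltac tryN N H :=
  (apply: (negP N); apply/eqP; rewrite -H; ring) ||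
  (apply: (negP N); rewrite -oppr_eq0; apply/eqP; rewrite -H; ring).

Lemma key m k (Em : m = (2 * k).+1) (hp : prime m.+2) (a1 a2 a3 b1 b2 b3 : 'I_m.+2) :
  a3 = -(a1 + a2) -> b1 + b2 + b3 = 0 -> ok3 k a1 a2 a3 -> ok3 k b1 b2 b3 ->
  [set cl k b1; cl k b2; cl k b3] = [set cl k a1; cl k a2; cl k a3] ->
  (b1, b2) \in sq3 a1 a2 a3.
Proof.
move=> Ha Hb oka okb HS.
have hm : (0 < m)%N by lia.
have P1 := pm6 Em oka (x := b1).
have P2 := pm6 Em oka (x := b2).
have P3 := pm6 Em oka (x := b3).
rewrite -HS !inE in P1 P2 P3.
move: okb => /andP[nb1 /andP[nb2 /andP[nb3 /andP[c12 /andP[c23 c13]]]]].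
have {P1}P1 := P1 nb1 ltac:(by rewrite eqxx ?orbT). have {P2}P2 := P2 nb2 ltac:(by rewrite eqxx ?orbT). have {P3}P3 := P3 nb3 ltac:(by rewrite eqxx ?orbT).
move: (oka) => /andP[na1 /andP[na2 /andP[na3 _]]].
have N1 := two_neq0 hp hm na1. have N2 := two_neq0 hp hm na2. have N3 := two_neq0 hp hm na3.
clear HS oka.
case: P1 => [E1|[E1|[E1|[E1|[E1|E1]]]]];
case: P2 => [E2|[E2|[E2|[E2|[E2|E2]]]]];
rewrite {}E1 {}E2 in c12 c13 c23 Hb *;
try (by rewrite /sq3 !in_cons ?xpair_eqE ?eqxx /= ?orbT);
try (by move: c12; rewrite ?clN eqxx);
case: P3 => [E3|[E3|[E3|[E3|[E3|E3]]]]];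
rewrite {}E3 in c13 c23 Hb;
try (by move: c13; rewrite ?clN eqxx);
try (by move: c23; rewrite ?clN eqxx);
subst a3; exfalso;
first [tryN N1 Hb | tryN N2 Hb | tryN N3 Hb].
Qed.

Ltac third Ha a1 a2 a3 :=
  match goal with |- context [-(?x + ?y)] =>
    let E := fresh "E" in
    first [ have E : -(x + y) = a1 by rewrite ?Ha; ring
          | have E : -(x + y) = -a1 by rewrite ?Ha; ring
          | have E : -(x + y) = a2 by rewrite ?Ha; ring
          | have E : -(x + y) = -a2 by rewrite ?Ha; ring
          | have E : -(x + y) = a3 by rewrite ?Ha; ring
          | have E : -(x + y) = -a3 by rewrite ?Ha; ring ]; rewrite E
  end.

Lemma orb_ok m k (a1 a2 a3 b1 b2 : 'I_m.+2) :
  a3 = -(a1 + a2) -> ok3 k a1 a2 a3 -> (b1, b2) \in sq3 a1 a2 a3 ->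
  ok3 k b1 b2 (-(b1 + b2)) /\
  [set cl k b1; cl k b2; cl k (-(b1 + b2))] = [set cl k a1; cl k a2; cl k a3].
Proof.
move=> Ha oka; move: (oka) => /andP[na1 /andP[na2 /andP[na3 /andP[c12 /andP[c23 c13]]]]].
have d12 := negbTE c12; have d23 := negbTE c23; have d13 := negbTE c13.
have d21 : (cl k a2 == cl k a1) = false by rewrite eq_sym.
have d32 : (cl k a3 == cl k a2) = false by rewrite eq_sym.
have d31 : (cl k a3 == cl k a1) = false by rewrite eq_sym.
rewrite /sq3 !in_cons in_nil orbF.
do 11? (case/orP; [move/eqP => [-> ->] | ]); try move/eqP => [-> ->];
third Ha a1 a2 a3; (split; [ rewrite /ok3 ?oppr_eq0 ?clN ?na1 ?na2 ?na3 ?d12 ?d23 ?d13 ?d21 ?d32 ?d31 //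
  | apply/setP => x; rewrite !inE ?clN;
    by case: (x == cl k a1); case: (x == cl k a2); case: (x == cl k a3) ]).
Qed.

Lemma neqcl m k (x y : 'I_m.+2) : cl k x != cl k y ->
  [/\ (x == y) = false, (x == -y) = false, (-x == y) = false & (-x == -y) = false].
Proof.
move=> h; split; apply/negbTE; apply: contra h => /eqP E.
- by rewrite E.
- by rewrite E clN.
- by rewrite -(clN k x) E.
- by rewrite -(clN k x) E clN.
Qed.

Lemma neqN m (x : 'I_m.+2) : x + x != 0 -> (x == -x) = false /\ (-x == x) = false.
Proof.
move=> h; split; apply/negbTE/eqP => E; move: h.
- by rewrite {2}E addrN eqxx.
- by rewrite -{2}E addrN eqxx.
Qed.

Lemma uniq_sq3 m k (hp : prime m.+2) (a1 a2 a3 : 'I_m.+2) : (0 < m)%N ->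
  ok3 k a1 a2 a3 -> uniq (sq3 a1 a2 a3).
Proof.
move=> hm /andP[na1 /andP[na2 /andP[na3 /andP[c12 /andP[c23 c13]]]]].
have [f1 f2 f3 f4] := neqcl c12. have [g1 g2 g3 g4] := neqcl c23. have [h1 h2 h3 h4] := neqcl c13.
rewrite eq_sym in c12. rewrite eq_sym in c23. rewrite eq_sym in c13.
have [f1' f2' f3' f4'] := neqcl c12. have [g1' g2' g3' g4'] := neqcl c23. have [h1' h2' h3' h4'] := neqcl c13.
have [n1 n1'] := neqN (two_neq0 hp hm na1).
have [n2 n2'] := neqN (two_neq0 hp hm na2).
have [n3 n3'] := neqN (two_neq0 hp hm na3).
rewrite /sq3 /= !inE !xpair_eqE !eqxx ?f1 ?f2 ?f3 ?f4 ?g1 ?g2 ?g3 ?g4 ?h1 ?h2 ?h3 ?h4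
  ?f1' ?f2' ?f3' ?f4' ?g1' ?g2' ?g3' ?g4' ?h1' ?h2' ?h3' ?h4' ?n1 ?n1' ?n2 ?n2' ?n3 ?n3' //.
Qed.

Definition Wset m k : {set 'I_m.+2 * 'I_m.+2} := [set w | ok3 k w.1 w.2 (-(w.1 + w.2))].
Definition gset m k (w : 'I_m.+2 * 'I_m.+2) : {set 'I_k.+1} :=
  [set cl k w.1; cl k w.2; cl k (-(w.1 + w.2))].

Lemma fibre m k (Em : m = (2 * k).+1) (hp : prime m.+2) w : w \in Wset m k ->
  [set w' in Wset m k | gset k w' == gset k w] = [set w' in sq3 w.1 w.2 (-(w.1 + w.2))].
Proof.
case: w => a1 a2; rewrite inE /= => oka.
apply/setP => [[b1 b2]]; rewrite !in_set /=; apply/idP/idP.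
- case/andP => okb /eqP; rewrite /gset /= => HS.
  by apply: (key Em hp (erefl _) _ oka okb HS); ring.
- move=> H; have [okb HS] := orb_ok (erefl _) oka H.
  by rewrite okb /gset /= HS eqxx.
Qed.

Lemma card_fibre12 m k (Em : m = (2 * k).+1) (hp : prime m.+2) w : w \in Wset m k ->
  #|[set w' in sq3 w.1 w.2 (-(w.1 + w.2))]| = 12%N.
Proof.
move=> hw; rewrite cardsE; apply/card_uniqP.
apply: (uniq_sq3 (k := k) hp); first lia.
by move: hw; rewrite inE.
Qed.

Lemma cardW m k (Em : m = (2 * k).+1) (hp : prime m.+2) :
  #|Wset m k| = (12 * #|gset k @: Wset m k|)%N.
Proof.
rewrite -sum1_card (partition_big_imset (gset k)) /= mulnC -sum_nat_const.
apply: eq_bigr => s /imsetP [w hw ->].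
rewrite -(card_fibre12 Em hp hw) -(fibre Em hp hw) -sum1_card; apply: eq_bigl => w' /=.
by rewrite [RHS]in_set.
Qed.


Lemma halfex m k (Em : m = (2 * k).+1) (u : 'I_m.+2) : exists t, u = t + t.
Proof.
exists ((k.+2)%:R * u); rewrite -mulrDl -natrD.
rewrite (_ : (k.+2 + k.+2 = m.+2 + 1)%N); last lia.
have P0 : (m.+2)%:R = 0 :> 'I_m.+2.
  apply/val_inj; rewrite Zp_nat /=. exact: modnn.
by rewrite natrD P0 add0r mul1r.
Qed.

Lemma cnt_u m k (Em : m = (2 * k).+1) (hk : (0 < k)%N) (hp : prime m.+2) (u : 'I_m.+2) :
  u != 0 -> #|[set v | ok3 k u v (-(u + v))]| = (m.+2 - 5)%N.
Proof.
have hm : (0 < m)%N by lia.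
have [t ->] := halfex Em u => hu.
have Zt : t != 0 by apply: contra hu => /eqP ->; rewrite addr0.
have Z3 : 3%:R * t != 0.
  apply/eqP; case/(Zp_dom hp) => /eqP; last by rewrite (negbTE Zt).
  by rewrite (negbTE (@natZp_neq0 m 3 _)) //; lia.
have Z2 := two_neq0 hp hm Zt. have Z4 := two_neq0 hp hm Z2. have Z6 := two_neq0 hp hm Z3.
have -> : [set v | ok3 k (t + t) v (-(t + t + v))] =
          ~: [set 0; t + t; -(t + t); -t; -((t + t) + (t + t))].
  apply/setP => v; rewrite !inE.
  have [->|hv] := eqVneq v 0; first by rewrite /ok3 !eqxx /= ?andbF.
  have [->|hw] := eqVneq v (-(t + t)); first by rewrite /ok3 addrN oppr0 !eqxx /= ?andbF ?orbT.
  have nuv : t + t + v != 0.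
    by apply: contra hw => /eqP E; apply/eqP; rewrite -(addKr (t + t) v) E addr0.
  rewrite /ok3 hu hv oppr_eq0 nuv !clN !cl_eq //.
  have e1 : (t + t + v == v) = false.
    by apply/negbTE; apply: contra hu => /eqP E; apply/eqP; rewrite -(addrK v (t + t)) E subrr.
  have e2 : (t + t + v == -v) = (v == -t).
    apply/eqP/eqP => E; last by rewrite E; ring.
    have F : (t + v) + (t + v) = 0 by rewrite -(subrr (-v)) -{1}E; ring.
    case: (eqVneq (t + v) 0) => [H|H]; last by move: (two_neq0 hp hm H); rewrite F eqxx.
    by rewrite -(addKr t v) H addr0.
  have e3 : (t + t + v == t + t) = false.
    by apply/negbTE; apply: contra hv => /eqP E; apply/eqP; rewrite -(addKr (t + t) v) E addNr.
  have e4 : (t + t + v == -(t + t)) = (v == -((t + t) + (t + t))).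
    apply/eqP/eqP => E; last by rewrite E; ring.
    by rewrite -(addKr (t + t) v) E; ring.
  rewrite e1 e2 e3 e4 ?(negbTE hv) ?(negbTE hw) /=.
  by case: (v == t + t); case: (v == -t); case: (v == -((t + t) + (t + t))).
rewrite cardsCs setCK card_ord.
have -> : [set 0; t + t; -(t + t); -t; -((t + t) + (t + t))] =
          [set x in [:: 0; t + t; -(t + t); -t; -((t + t) + (t + t))]].
  by apply/setP => x; rewrite !inE !orbA.
rewrite cardsE.
have F1 : forall x y : 'I_m.+2, x - y != 0 -> (x == y) = false.
  by move=> x y; rewrite subr_eq0 => /negbTE.
Ltac kl Zt Z2 Z3 Z4 Z6 F1 := apply: F1; apply/negP;
  let E := fresh "E" in move/eqP => E;
  first [tryN Zt E | tryN Z2 E | tryN Z3 E | tryN Z4 E | tryN Z6 E].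
have U : uniq [:: 0; t + t; -(t + t); -t; -((t + t) + (t + t))].
  rewrite /= !inE.
  rewrite (_ : (0 == t + t) = false); last by kl Zt Z2 Z3 Z4 Z6 F1.
  rewrite (_ : (0 == -(t + t)) = false); last by kl Zt Z2 Z3 Z4 Z6 F1.
  rewrite (_ : (0 == -t) = false); last by kl Zt Z2 Z3 Z4 Z6 F1.
  rewrite (_ : (0 == -((t + t) + (t + t))) = false); last by kl Zt Z2 Z3 Z4 Z6 F1.
  rewrite (_ : (t + t == -(t + t)) = false); last by kl Zt Z2 Z3 Z4 Z6 F1.
  rewrite (_ : (t + t == -t) = false); last by kl Zt Z2 Z3 Z4 Z6 F1.
  rewrite (_ : (t + t == -((t + t) + (t + t))) = false); last by kl Zt Z2 Z3 Z4 Z6 F1.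
  rewrite (_ : (-(t + t) == -t) = false); last by kl Zt Z2 Z3 Z4 Z6 F1.
  rewrite (_ : (-(t + t) == -((t + t) + (t + t))) = false); last by kl Zt Z2 Z3 Z4 Z6 F1.
  rewrite (_ : (-t == -((t + t) + (t + t))) = false); last by kl Zt Z2 Z3 Z4 Z6 F1.
  by [].
by move/card_uniqP: U => ->.
Qed.

Lemma cardW2 m k (Em : m = (2 * k).+1) (hk : (0 < k)%N) (hp : prime m.+2) :
  #|Wset m k| = ((m.+2 - 1) * (m.+2 - 5))%N.
Proof.
have E1 : #|Wset m k| = (\sum_(u : 'I_m.+2) #|[set v | ok3 k u v (-(u + v))]|)%N.
  rewrite -sum1_card big_mkcond /=.
  rewrite (eq_bigr (fun u => \sum_(v : 'I_m.+2) (if (u, v) \in Wset m k then 1%N else 0%N))).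
    by rewrite pair_big /=; apply: eq_bigr => [[u v]].
  move=> u _; rewrite -sum1_card big_mkcond /=.
  by apply: eq_bigr => v _; rewrite !inE.
rewrite E1 (bigD1 0) //=.
have -> : #|[set v | ok3 k (0 : 'I_m.+2) v (-(0 + v))]| = (0%N : nat).
  by apply: eq_card0 => v; rewrite !inE /ok3 eqxx.
rewrite add0n (eq_bigr (fun _ => (m.+2 - 5)%N)); last by move=> u hu; exact: cnt_u.
rewrite (eq_bigl (fun u => u \in [set u : 'I_m.+2 | u != 0])); last by move=> u; rewrite inE.
rewrite sum_nat_const; congr (_ * _)%N.
rewrite (_ : [set u : 'I_m.+2 | u != 0] = [set~ 0]); last by apply/setP=> u; rewrite !inE.
by rewrite cardsC1 card_ord subn1.
Qed.


Lemma tri_eq m k (c : 'I_m.+2 -> 'I_m.+2 -> 'I_k.+1) :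
  (forall x y, c x y = cl k (x - y)) ->
  triangle_colour_sets c = gset k @: Wset m k.
Proof.
move=> hc; apply/setP => s; apply/imsetP/imsetP.
- case=> [[[x y] z]]; rewrite inE /= => ht ->.
  exists (x - y, y - z).
    rewrite inE /= (_ : -(x - y + (y - z)) = -(x - z)); last by ring.
    by rewrite /ok3 !subr_eq0 oppr_eq0 subr_eq0 clN -!hc.
  rewrite /gset /= (_ : -(x - y + (y - z)) = -(x - z)); last by ring.
  by rewrite clN -!hc.
- case=> [[u v]]; rewrite inE /= => hw ->.
  exists ((u + v, v), 0); rewrite ?inE /=.
    move: hw; rewrite /multicoloured /ok3 !hc addrK !subr0 -[u + v == v]subr_eq0 addrK.
    by rewrite oppr_eq0 !clN.
  by rewrite /gset /= !hc addrK !subr0 clN.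
Qed.

Lemma conn m k (Em : m = (2 * k).+1) (hp : prime m.+2)
  (c : 'I_m.+2 -> 'I_m.+2 -> 'I_k.+1) :
  (forall x y, c x y = cl k (x - y)) -> connected_colouring c.
Proof.
move=> hc i x y.
have hi := ltn_ord i.
pose d : 'I_m.+2 := (i.+1)%:R.
have vd : val d = i.+1 by rewrite natZp //; lia.
have dn0 : d != 0 by apply/eqP => /(congr1 val); rewrite vd.
have hi2 : (\val i < k.+1)%N := hi.
have cd : cl k d = i by apply/val_inj; rewrite cl_val // vd -subn1; change (\val i) with (nat_of_ord i); lia.
have step : forall j : nat, connect (colour_class c i) x (x + d *+ j).
  elim=> [|j IH]; first by rewrite mulr0n addr0 connect0.
  apply: connect_trans IH (connect1 _).
  have E : x + d *+ j - (x + d *+ j.+1) = - d by rewrite mulrS; ring.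
  by rewrite /colour_class hc E clN cd eqxx andbT -subr_eq0 E oppr_eq0.
have Ud : d \is a GRing.unit.
  have U : coprime m.+2 i.+1 by rewrite prime_coprime //; apply/negP => /dvdn_leq; lia.
  move: U; rewrite -(@unitZpE m.+2 i.+1) // => U; exact: U.
have := step (val (d^-1 * (y - x))).
by rewrite -mulr_natr natr_Zp mulVKr // addrC subrK.
Qed.

Lemma mainL m k (Em : m = (2 * k).+1) (hk : (0 < k)%N) (hp : prime m.+2) :
  exists c : 'I_m.+2 -> 'I_m.+2 -> 'I_k.+1,
    [/\ edge_colouring c, connected_colouring c &
        #|triangle_colour_sets c| = (k.+1 * (k.+1 - 2) %/ 3)%N].
Proof.
exists (fun x y => cl k (x - y)); split.
- by move=> x y _; rewrite -opprB clN.
- exact: conn.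
- rewrite (@tri_eq m k (fun x y => cl k (x - y))) //.
  have := cardW Em hp; rewrite cardW2 // => H.
  move: #|_| H => s H.
  case: k Em hk H => [//|j] Em _ H.
  rewrite (_ : (j.+2 - 2 = j)%N); last lia.
  rewrite Em (_ : ((2 * j.+1).+1.+2 - 1 = 2 * j.+2)%N) in H; last lia.
  rewrite (_ : ((2 * j.+1).+1.+2 - 5 = 2 * j)%N) in H; last lia.
  have H2 : (j.+2 * j = 3 * s)%N by nia.
  by rewrite H2 mulKn.
Qed.

Local Close Scope ring_scope.

Theorem proposition3 (k : nat) :
  2 <= k -> prime (2 * k + 1) ->
  exists c : 'I_(2 * k + 1) -> 'I_(2 * k + 1) -> 'I_k,
    [/\ edge_colouring c, connected_colouring c &
        #|triangle_colour_sets c| = k * (k - 2) %/ 3].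
Proof.
case: k => [//|k] hk.
have E : ((2 * k).+1).+2 = 2 * k.+1 + 1 by lia.
rewrite -E => hp.
have hk' : 0 < k by lia.
exact: (@mainL (2 * k).+1 k erefl hk' hp).
Qed.
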